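(* Let $\mathbb{K}$ be a field of characteristic $0$ and $R=\mathbb{K}[\mathbf t,\mathbf x]=\mathbb{K}[t_1,\dots,t_d,x_1,\dots,x_{n-d}]$. Let $I\subseteq R$ be a primary ideal of dimension $d$, $P=\sqrt I$, where $\mathbf t$ is a set of $d$ variables algebraically independent in $R/I$ (independent variables) and $\mathbf x$ are the remaining (dependent) variables. Let $S=\mathbb{K}(\mathbf t)[\mathbf x]$ and $IS$ the extension of $I$ to $S$. (1) If $\{D_i\}_i\subseteq W_S$ is a set of Noetherian operators for $IS$, then any lift $\{N_i\}_i\subseteq W_R$ of $\{D_i\}_i$ is a set of Noetherian operators for $I$. (2) Conversely, if $\{N_i\}_i\subseteq W_R$ is a set of Noetherian operators for $I$ involving only the differentials $\partial_{\mathbf x}$ (and not $\partial_{\mathbf t}$), then their images $\{D_i\}_i\subseteq W_S$ form a set of Noetherian operators for $IS$.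
   Context: $W_R=R\langle\partial_{t_1},\dots,\partial_{t_d},\partial_{x_1},\dots,\partial_{x_{n-d}}\rangle$ is the Weyl algebra, and $W_S=S\otimes_R W_R$ the ring of differential operators with coefficients in $S$, both acting by multiplication and partial differentiation (written $D\bullet f$). For a ring $T\in\{R,S\}$ and an ideal $J\subseteq T$, a set $N\subseteq W_T$ is a set of Noetherian operators for $J$ if for all $f\in T$: $f\in J\iff D\bullet f\in\sqrt J$ for all $D\in N$. A lift of $D\in W_S$ is an element $uD\in W_R$ with $u\in\mathbb{K}[\mathbf t]\setminus\{0\}$ (such $u$ exists by clearing denominators); $W_R\hookrightarrow W_S$ is the natural inclusion. *)

(* Defs.v *)
From HB Require Import structures.
From mathcomp Require Import all_boot all_order all_algebra.
From mathcomp Require Import fraction generic_quotient.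
From mathcomp.multinomials Require Import mpoly.
Set Implicit Arguments. Unset Strict Implicit. Unset Printing Implicit Defensive.
Import GRing.Theory.
Local Open Scope ring_scope.

Section Ideals.
Variable T : comNzRingType.

Definition is_ideal (J : T -> Prop) : Prop :=
  [/\ J 0, (forall a b, J a -> J b -> J (a + b)) & (forall r a, J a -> J (r * a))].

Definition radical (J : T -> Prop) : T -> Prop := fun f => exists k : nat, J (f ^+ k).

Definition is_prime_ideal (J : T -> Prop) : Prop :=
  [/\ is_ideal J, ~ J 1 & forall a b, J (a * b) -> J a \/ J b].

Definition is_primary_ideal (J : T -> Prop) : Prop :=
  [/\ is_ideal J, ~ J 1 & forall a b, J (a * b) -> J a \/ radical J b].

Definition has_prime_chain (J : T -> Prop) (k : nat) : Prop :=
  exists P : nat -> T -> Prop,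
    [/\ (forall i, (i <= k)%N -> is_prime_ideal (P i)),
        (forall f, J f -> P 0%N f) &
        (forall i, (i < k)%N ->
           (forall f, P i f -> P i.+1 f) /\ exists f, P i.+1 f /\ ~ P i f)].

Definition krull_dim (J : T -> Prop) (k : nat) : Prop :=
  has_prime_chain J k /\ ~ has_prime_chain J k.+1.
End Ideals.

(* An operator  D = sum_mu c_mu d^mu  with coefficients in U and d+m partial
   derivatives is encoded (normally ordered, coefficients on the left) as the
   element of {mpoly U[d+m]} whose coefficient at the exponent mu is c_mu.
   Variables 0..d-1 (lshift) are the t's, variables d..d+m-1 (rshift) the x's. *)
Section Operators.
Variables (U : comNzRingType) (d m : nat).
Variable der : 'I_(d + m) -> U -> U.

Definition dpow (mu : 'X_{1..d + m}) (f : U) : U :=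
  foldr (fun i => iter (mu i) (der i)) f (enum 'I_(d + m)).

Definition act (D : {mpoly U[d + m]}) (f : U) : U :=
  \sum_(mu <- msupp D) D@_mu * dpow mu f.

Definition noetherian_ops (J : U -> Prop) (Idx : Type) (N : Idx -> {mpoly U[d + m]}) :=
  forall f : U, J f <-> (forall i, radical J (act (N i) f)).
End Operators.

Section Rings.
Variables (K : fieldType) (d m : nat).

Definition Kt := {mpoly K[d]}.
(* R = K[t, x], realised as K[t][x] *)
Definition Rring := {mpoly Kt[m]}.
Definition Ktf := {fraction Kt}.
Definition Sring := {mpoly Ktf[m]}.
Definition WR := {mpoly Rring[d + m]}.
Definition WS := {mpoly Sring[d + m]}.

Local Notation "x %:F" := (@FracField.tofrac Kt x).

Definition fderiv (j : 'I_d) (q : Ktf) : Ktf :=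
  let r := repr q in
  ((mderiv j \n_r * \d_r - \n_r * mderiv j \d_r)%:F) / ((\d_r ^+ 2)%:F).

Definition derR (i : 'I_(d + m)) (f : Rring) : Rring :=
  match split i with
  | inl j => map_mpoly (mderiv j) f
  | inr k => mderiv k f
  end.

Definition derS (i : 'I_(d + m)) (f : Sring) : Sring :=
  match split i with
  | inl j => map_mpoly (fderiv j) f
  | inr k => mderiv k f
  end.

Definition embRS (f : Rring) : Sring := map_mpoly (fun c : Kt => c%:F) f.
Definition embW (N : WR) : WS := map_mpoly embRS N.

Definition ext_ideal (I : Rring -> Prop) : Sring -> Prop :=
  fun g => exists (k : nat) (c : 'I_k -> Sring) (f : 'I_k -> Rring),
    (forall i, I (f i)) /\ g = \sum_(i < k) c i * embRS (f i).

(* t_1..t_d are algebraically independent in R/I *)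
Definition t_independent (I : Rring -> Prop) : Prop :=
  forall u : Kt, I (u%:MP) -> u = 0.

Definition is_lift (N : WR) (D : WS) : Prop :=
  exists u : Kt, u != 0 /\ embW N = ((u%:F)%:MP : Sring) *: D.

Definition only_dx (N : WR) : Prop :=
  forall mu : 'X_{1..d + m}, mu \in msupp N -> forall j : 'I_d, mu (lshift m j) = 0%N.
End Rings.

(* Main.v *)
Require Import Defs.
From HB Require Import structures.
From mathcomp Require Import all_boot all_order all_algebra.
From mathcomp Require Import fraction generic_quotient.
From mathcomp.multinomials Require Import mpoly.
From mathcomp Require Import ring.
Set Implicit Arguments. Unset Strict Implicit. Unset Printing Implicit Defensive.
Import GRing.Theory.
Local Open Scope ring_scope.

Section Gen.
Variables (n : nat) (R S : nzRingType).

Lemma mcoeff_mapg (g : R -> S) (p : {mpoly R[n]}) mu :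
  g 0 = 0 -> (map_mpoly g p)@_mu = g p@_mu.
Proof.
move=> g0; rewrite /map_mpoly /mmap raddf_sum /=.
rewrite (eq_bigr (fun m' => g p@_m' * (m' == mu)%:R)); last first.
  by move=> m' _; rewrite mmap1_id /= mcoeffCM mcoeffX.
case: (boolP (mu \in msupp p)) => hm.
  rewrite (bigD1_seq mu) ?msupp_uniq //= eqxx mulr1 big1 ?addr0 //.
  by move=> m' /negbTE ->; rewrite mulr0.
rewrite big1_seq; last first.
  move=> m' /andP [_ hm'].
  have ne : m' != mu by apply/eqP => e; rewrite -e hm' in hm.
  by rewrite (negbTE ne) mulr0.
by move: hm; rewrite -mcoeff_eq0 => /eqP ->; rewrite g0.
Qed.

Lemma msupp_mapg (g : R -> S) (p : {mpoly R[n]}) :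
  g 0 = 0 -> {subset msupp (map_mpoly g p) <= msupp p}.
Proof.
move=> g0 mu; rewrite !mcoeff_msupp mcoeff_mapg //.
by apply: contraNN => /eqP ->; rewrite g0.
Qed.
End Gen.

Section Gen2.
Variables (U : comNzRingType) (d m : nat) (der : 'I_(d + m) -> U -> U).

Lemma act_sub (D : {mpoly U[d + m]}) (s : seq 'X_{1..d + m}) f :
  uniq s -> {subset msupp D <= s} ->
  act der D f = \sum_(mu <- s) D@_mu * dpow der mu f.
Proof.
move=> us sub; rewrite /act [RHS](bigID (fun mu => mu \in msupp D)) /=.
rewrite [X in _ + X]big1 ?addr0; last first.
  by move=> mu; rewrite -mcoeff_eq0 => /eqP ->; rewrite mul0r.
rewrite -[RHS]big_filter; apply: perm_big.
apply: uniq_perm; rewrite ?msupp_uniq ?filter_uniq // => mu.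
rewrite mem_filter; case: (boolP (mu \in msupp D)) => h //=.
by rewrite (sub _ h).
Qed.

Lemma actZ (c : U) (D : {mpoly U[d + m]}) f :
  act der (c *: D) f = c * act der D f.
Proof.
rewrite (act_sub _ (msupp_uniq D)); last exact: msuppZ_le.
rewrite /act mulr_sumr; apply: eq_bigr => mu _.
by rewrite mcoeffZ mulrA.
Qed.
End Gen2.

Section Gen3.
Variables (T U : comNzRingType) (d m : nat).
Variables (der1 : 'I_(d + m) -> T -> T) (der2 : 'I_(d + m) -> U -> U).
Variable phi : T -> U.
Hypothesis phi0 : phi 0 = 0.
Hypothesis phiD : {morph phi : x y / x + y}.
Hypothesis phiM : {morph phi : x y / x * y}.
Hypothesis phider : forall i x, der2 i (phi x) = phi (der1 i x).

Lemma dpow_phi mu f : dpow der2 mu (phi f) = phi (dpow der1 mu f).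
Proof.
rewrite /dpow; elim: (enum _) => //= i s ->.
by elim: (mu i) => //= k ->.
Qed.

Lemma act_phi (N : {mpoly T[d + m]}) f :
  act der2 (map_mpoly phi N) (phi f) = phi (act der1 N f).
Proof.
rewrite (@act_sub _ _ _ der2 (map_mpoly phi N) (msupp N) (phi f) (msupp_uniq N)); last first.
  by move=> mu; apply: (@msupp_mapg _ _ _ phi N phi0).
rewrite /act (big_morph phi phiD phi0); apply: eq_bigr => mu _.
by rewrite mcoeff_mapg // dpow_phi phiM.
Qed.
End Gen3.

Section Frac.
Variable R : idomainType.
Local Open Scope quotient_scope.
Local Notation F := (@FracField.tofrac R).

Lemma tofracE c : F c = \pi_({fraction R}) (Ratio c 1).
Proof. by unlock FracField.tofrac. Qed.

Lemma repr_tofrac c : \n_(repr (F c)) = \d_(repr (F c)) * c.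
Proof.
have := FracField.equivf_l (Ratio c 1).
by rewrite -tofracE !numden_Ratio ?oner_eq0 // mulr1.
Qed.

Lemma frac_key (r : {ratio R}) : F \d_r * \pi_({fraction R}) r = F \n_r.
Proof.
rewrite !tofracE.
transitivity (\pi_({fraction R}) (FracField.mulf (Ratio \d_r 1) r)).
  by symmetry; exact: FracField.pi_mul.
apply/eqmodP.
rewrite /= FracField.equivfE /FracField.mulf !numden_Ratio ?mul1r ?mulr1 ?mulf_neq0 ?oner_eq0 //.
all: exact: denom_ratioP.
Qed.

Lemma frac_clear (q : {fraction R}) : exists s a, s != 0 /\ F s * q = F a.
Proof.
exists (\d_(repr q)), (\n_(repr q)); split; first exact: denom_ratioP.
by have := frac_key (repr q); rewrite reprK.
Qed.
End Frac.

Section Conc.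
Variables (K : fieldType) (d m : nat).
Local Notation Kt := (Kt K d).
Local Notation F := (@FracField.tofrac Kt).

Lemma fderiv_tofrac (j : 'I_d) c : @fderiv K d j (F c) = F (mderiv j c).
Proof.
rewrite /fderiv /= repr_tofrac.
set r := repr (F c); set n := \d_r.
have nz : n != 0 := denom_ratioP r.
rewrite mderivM.
have -> : ((mderiv j n * c + n * mderiv j c) * n - n * c * mderiv j n)
   = mderiv j c * n ^+ 2 by ring.
by rewrite rmorphM /= mulfK // tofrac_eq0 expf_neq0.
Qed.

Lemma fderiv0 (j : 'I_d) : @fderiv K d j 0 = 0.
Proof. by have := fderiv_tofrac j 0; rewrite mderiv0 !rmorph0. Qed.

Lemma embRSE (f : Rring K d m) : embRS f = map_mpoly F f.
Proof. by []. Qed.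

Lemma embRS0 : @embRS K d m 0 = 0. Proof. by rewrite embRSE rmorph0. Qed.
Lemma embRSD : {morph (@embRS K d m) : x y / x + y}.
Proof. by move=> x y; rewrite !embRSE rmorphD. Qed.
Lemma embRSM : {morph (@embRS K d m) : x y / x * y}.
Proof. by move=> x y; rewrite !embRSE rmorphM. Qed.
Lemma embRSX k : {morph (@embRS K d m) : x / x ^+ k}.
Proof. by move=> x; rewrite !embRSE rmorphXn. Qed.
Lemma embRSC s : @embRS K d m (s%:MP) = (F s)%:MP.
Proof. by rewrite embRSE map_mpolyC. Qed.

Lemma embRS_inj : injective (@embRS K d m).
Proof.
move=> f g e; apply/mpolyP => mu.
have := congr1 (mcoeff mu) e; rewrite !embRSE !mcoeff_map_mpoly.
by move/eqP; rewrite tofrac_eq => /eqP.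
Qed.

Lemma derRS (i : 'I_(d + m)) (f : Rring K d m) : derS i (embRS f) = embRS (derR i f).
Proof.
rewrite /derS /derR; case: (split i) => [j|k].
  rewrite embRSE.
  apply/mpolyP => mu.
  transitivity (fderiv j ((map_mpoly F f)@_mu)).
    exact: (mcoeff_mapg _ _ (fderiv0 j)).
  rewrite [X in fderiv j X]mcoeff_map_mpoly fderiv_tofrac embRSE [RHS]mcoeff_map_mpoly.
  congr (F _); symmetry; exact: (mcoeff_mapg _ _ (mderiv0 _ j)).
rewrite embRSE; apply/mpolyP => mu.
rewrite [LHS]mcoeff_mderiv [RHS]mcoeff_map_mpoly mcoeff_mderiv.
by rewrite [X in X *+ _]mcoeff_map_mpoly raddfMn.
Qed.

Lemma act_emb (N : WR K d m) (f : Rring K d m) :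
  act (@derS K d m) (embW N) (embRS f) = embRS (act (@derR K d m) N f).
Proof.
apply: act_phi.
- exact: embRS0.
- exact: embRSD.
- exact: embRSM.
- exact: derRS.
Qed.

Lemma S_clear (g : Sring K d m) : exists s f, s != 0 /\ (F s)%:MP * g = embRS f.
Proof.
elim/mpolyind: g => [|c mu p _ _ [s2 [f2 [nz2 e2]]]].
  by exists 1, 0; rewrite oner_neq0 mulr0 embRS0.
have [s1 [a [nz1 e1]]] := frac_clear c.
exists (s1 * s2), ((s2 * a) *: 'X_[mu] + s1 *: f2); split; first by rewrite mulf_neq0.
rewrite mul_mpolyC in e2.
rewrite embRSD !embRSE !map_mpolyZ map_mpolyX -embRSE -e2.
rewrite mul_mpolyC scalerDr !scalerA rmorphM /= [F s1 * _]mulrC -mulrA e1 -rmorphM /=.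
by rewrite [s2 * _]mulrC.
Qed.

Lemma wK s (g : Sring K d m) : s != 0 -> ((F s)^-1)%:MP * ((F s)%:MP * g) = g.
Proof.
move=> nz; rewrite mulrA -rmorphM /= mulVf ?rmorph1 ?mul1r //.
by rewrite tofrac_eq0.
Qed.

Section Id.
Variable I : Rring K d m -> Prop.
Hypothesis hI : is_ideal I.

Lemma ext_clear g : ext_ideal I g ->
  exists s r, s != 0 /\ I r /\ (F s)%:MP * g = embRS r.
Proof.
case: hI => I0 ID IM.
case=> k [c [f [If ->]]]; elim: k c f If => [|k IH] c f If.
  by exists 1, 0; rewrite big_ord0 mulr0 embRS0 oner_neq0.
rewrite big_ord_recr /=.
have [s1 [r1 [nz1 [I1 e1]]]] := IH (fun i => c (widen_ord (leqnSn k) i))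
   (fun i => f (widen_ord (leqnSn k) i)) (fun i => If _).
have [s2 [a2 [nz2 e2]]] := S_clear (c ord_max).
exists (s1 * s2), (s2%:MP * r1 + s1%:MP * (a2 * f ord_max)); split.
  by rewrite mulf_neq0.
split; first by apply: ID; [apply: (IM) | apply: (IM); apply: (IM)].
rewrite embRSD !embRSM !embRSC -e1 -e2 rmorphM /= mpolyCM.
ring.
Qed.

Lemma ext_mul r g : ext_ideal I g -> ext_ideal I (r * g).
Proof.
case=> k [c [f [If ->]]]; exists k, (fun i => r * c i), f; split => //.
by rewrite mulr_sumr; apply: eq_bigr => i _; rewrite mulrA.
Qed.

Lemma ext_of f : I f -> ext_ideal I (embRS f).
Proof.
move=> If; exists 1%N, (fun _ => 1), (fun _ => f); split => //.
by rewrite big_ord1 mul1r.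
Qed.

Lemma rad_ext_of f : radical I f -> radical (ext_ideal I) (embRS f).
Proof. by case=> k Ik; exists k; rewrite -embRSX; exact: ext_of. Qed.

Hypothesis hP : is_primary_ideal I.
Hypothesis hT : t_independent I.

Lemma contr h : ext_ideal I (embRS h) -> I h.
Proof.
move=> /ext_clear [s [r [nz [Ir e]]]].
case: hP => _ _ hpr.
rewrite -embRSC -embRSM in e; have {}e := embRS_inj e.
have : I (h * s%:MP) by rewrite mulrC e.
case/hpr => // [[k]].
rewrite -rmorphXn => /hT /eqP; rewrite expf_eq0 (negbTE nz) andbF.
by [].
Qed.

Lemma contr_rad h : radical (ext_ideal I) (embRS h) -> radical I h.
Proof. by case=> k; rewrite -embRSX => /contr; exists k. Qed.
End Id.

Lemma rad_mul (T : comNzRingType) (J : T -> Prop) :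
  (forall r a, J a -> J (r * a)) -> forall r a, radical J a -> radical J (r * a).
Proof. by move=> JM r a [k Ja]; exists k; rewrite exprMn; apply: JM. Qed.

Lemma act_onlydx (N : WR K d m) (c : Ktf K d) (h : Sring K d m) : only_dx N ->
  act (@derS K d m) (embW N) (c%:MP * h) = c%:MP * act (@derS K d m) (embW N) h.
Proof.
move=> hx.
have sub : {subset msupp (embW N) <= msupp N}.
  by move=> mu; apply: (@msupp_mapg _ _ _ (@embRS K d m) N embRS0).
rewrite !(@act_sub _ _ _ _ (embW N) (msupp N)) ?msupp_uniq //.
rewrite mulr_sumr; apply: eq_big_seq => mu hmu.
rewrite mulrCA; congr (_ * _).
rewrite /dpow; elim: (enum _) => //= i s ->.
have [z|hd] : mu i = 0%N \/ forall x, derS i (c%:MP * x) = c%:MP * derS i x.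
  rewrite /derS; case E: (split i) => [j|k].
    left; have -> : i = lshift m j by rewrite -(splitK i) E.
    exact: hx.
  by right => x; rewrite mderiv_mulC.
  by rewrite z.
by elim: (mu i) => //= n ->; rewrite hd.
Qed.
End Conc.

Unset Implicit Arguments.

Theorem proposition3p13 (K : fieldType) (d m : nat) (I : Rring K d m -> Prop) :
  [pchar K] =i pred0 ->
  is_primary_ideal I ->
  krull_dim I d ->
  t_independent I ->
  (forall (Idx : Type) (D : Idx -> WS K d m) (N : Idx -> WR K d m),
      noetherian_ops (@derS K d m) (ext_ideal I) D ->
      (forall i, is_lift (N i) (D i)) ->
      noetherian_ops (@derR K d m) I N) /\
  (forall (Idx : Type) (N : Idx -> WR K d m),
      noetherian_ops (@derR K d m) I N ->
      (forall i, only_dx (N i)) ->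
      noetherian_ops (@derS K d m) (ext_ideal I) (fun i => embW (N i))).
Proof.
move=> _ hP _ hT.
have hI : is_ideal I by case: hP.
have emul := @ext_mul K d m I.
split.
- move=> Idx D N hD hL f.
  have key : forall i, exists u, u != 0 /\
      embRS (act (@derR K d m) (N i) f)
      = ((FracField.tofrac u)%:MP : Sring K d m) * act (@derS K d m) (D i) (embRS f).
    by move=> i; have [u [nz e]] := hL i; exists u; split => //; rewrite -act_emb e actZ.
  split.
  + move=> If i; have [u [nz e]] := key i.
    apply: (contr_rad hI hP hT); rewrite e; apply: (rad_mul emul).
    exact: (hD _).1 (ext_of If) i.
  + move=> H; apply: (contr hI hP hT); apply/hD => i.
    have [u [nz e]] := key i.
    rewrite -(wK (act (@derS K d m) (D i) (embRS f)) nz) -e.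
    by apply: (rad_mul emul); apply: rad_ext_of.
- move=> Idx N hN hx g.
  have [s [f [nz e]]] := S_clear g.
  have key : forall i, embRS (act (@derR K d m) (N i) f)
      = ((FracField.tofrac s)%:MP : Sring K d m) * act (@derS K d m) (embW (N i)) g.
    by move=> i; rewrite -act_emb -e act_onlydx.
  split.
  + move=> Ig i.
    have If : I f by apply: (contr hI hP hT); rewrite -e; exact: emul.
    rewrite -(wK (act (@derS K d m) (embW (N i)) g) nz) -key; apply: (rad_mul emul); apply: rad_ext_of.
    exact: (hN f).1 If i.
  + move=> H.
    have If : I f.
      apply/hN => i; apply: (contr_rad hI hP hT); rewrite key.
      exact: (rad_mul emul) (H i).
    by rewrite -(wK g nz) e; apply: emul; apply: ext_of.
Qed.
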